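(* Let $K\subseteq[0,1]^n$ be compact and $\epsilon>0$. If $t\ge \log(8n)/(2\epsilon^2)$, then for every $p\in K$ and every measurable set $A\subseteq[0,1]^n$, $$\mathbb{P}_p[Y_{t,\epsilon}\in A]\le 2\,\mathbb{P}_p[\bar X_t\in A].$$
   Context: For $p\in[0,1]^n$, let $X_1,X_2,\dots$ be i.i.d. random vectors in $\{0,1\}^n$ whose coordinates $X_{s,i}$ are independent Bernoulli($p_i$) variables, and $\bar X_t=(X_1+\dots+X_t)/t$; $\mathbb{P}_p$ denotes probability under this law. For $K\subseteq\mathbb{R}^n$, $\mathcal{B}_\infty(K,\epsilon)=\{x\in\mathbb{R}^n:\exists q\in K,\ \|x-q\|_\infty<\epsilon\}$. $Y_{t,\epsilon}$ is a random variable with the conditional law of $\bar X_t$ given $\bar X_t\in\mathcal{B}_\infty(K,\epsilon)$, i.e. $\mathbb{P}_p[Y_{t,\epsilon}\in A]=\mathbb{P}_p[\bar X_t\in A\mid \bar X_t\in\mathcal{B}_\infty(K,\epsilon)]$. *)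

(* Defs.v *)
From HB Require Import structures.
From mathcomp Require Import all_boot all_order all_algebra.
From mathcomp Require Import all_classical all_reals all_analysis.
Set Implicit Arguments. Unset Strict Implicit. Unset Printing Implicit Defensive.
Import Order.TTheory GRing.Theory Num.Theory.
Import numFieldNormedType.Exports.
Local Open Scope classical_set_scope.
Local Open Scope ring_scope.

Section Defs.
Variables (R : realType) (n t : nat).

Definition unit_cube : set 'rV[R]_n :=
  [set x | forall i : 'I_n, 0 <= x ord0 i <= 1].

Definition Binf (K : set 'rV[R]_n) (eps : R) : set 'rV[R]_n :=
  [set x | exists2 q, K q & forall i : 'I_n, `|x ord0 i - q ord0 i| < eps].

(* Canonical sample space for X_1, ..., X_t: an outcome w assigns to each
   time s < t and coordinate i < n the bit X_{s+1,i} = w (s, i). *)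
Definition outcome := {ffun 'I_t * 'I_n -> bool}.

Definition weight (p : 'rV[R]_n) (w : outcome) : R :=
  \prod_(si : 'I_t * 'I_n) (if w si then p ord0 si.2 else 1 - p ord0 si.2).

Definition Xbar (w : outcome) : 'rV[R]_n :=
  \row_(i < n) ((\sum_(s < t) (w (s, i))%:R) / t%:R).

Definition PXbar (p : 'rV[R]_n) (A : set 'rV[R]_n) : R :=
  \sum_(w : outcome) (if `[< A (Xbar w) >] then weight p w else 0).

(* P_p[ Y_{t,eps} \in A ] = P_p[ \bar X_t \in A | \bar X_t \in B_oo(K,eps) ] *)
Definition PY (K : set 'rV[R]_n) (eps : R) (p : 'rV[R]_n) (A : set 'rV[R]_n) : R :=
  PXbar p (A `&` Binf K eps) / PXbar p (Binf K eps).

End Defs.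

(* Main.v *)
Require Import Defs.
From HB Require Import structures.
From mathcomp Require Import all_boot all_order all_algebra.
From mathcomp Require Import all_classical all_reals all_analysis.
Import Order.TTheory GRing.Theory Num.Theory.
Import numFieldNormedType.Exports.
Local Open Scope classical_set_scope.
Local Open Scope ring_scope.
From mathcomp Require Import ring lra.

Section Calc.
Context {R : realType}.

Lemma is_derive_comp1 (f g : R -> R) (x df dg : R) :
  is_derive x 1 f df -> is_derive (f x) 1 g dg ->
  is_derive x 1 (g \o f) (dg * df).
Proof.
move=> [f1 f2] [g1 g2].
have dc : derivable (g \o f) x 1.
  apply/derivable1_diffP; apply: differentiable_comp; exact/derivable1_diffP.
apply: DeriveDef => //.
by rewrite -derive1E derive1_comp // !derive1E f2 g2.
Qed.

Lemma is_deriveV1 (f : R -> R) (x df : R) : f x != 0 -> is_derive x 1 f df ->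
  is_derive x 1 (fun y => (f y)^-1) (- (f x) ^- 2 * df).
Proof.
move=> fx0 [f1 f2]; apply: DeriveDef; first exact: derivableV.
by rewrite deriveV // f2.
Qed.

Lemma ndecr_of (f df : R -> R) (a b : R) :
  (forall x : R, is_derive x 1 f (df x)) ->
  (forall x, a < x < b -> 0 <= df x) -> a <= b -> f a <= f b.
Proof.
move=> hd hpos ab.
apply: (@ger0_derive1_ndecr R f a b) => //.
- move=> x; rewrite in_itv /= => /hpos.
  by rewrite derive1E (@derive_val _ _ _ _ _ _ _ (hd x)).
- apply: continuous_subspaceT => x.
  by case: (hd x) => /derivable1_diffP/differentiable_continuous.
Qed.


End Calc.

Section Hoeff.
Variable R : realType.
Variable p : R.
Hypothesis p01 : 0 <= p <= 1.

Definition dd : R -> R := fun x => 1 - p + p * expR x.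

Lemma dd_gt0 x : 0 < dd x.
Proof.
rewrite /dd; case/andP: p01 => p0 p1.
have e0 := expR_gt0 x.
case: (ltP p 1) => hp.
  have : 0 <= p * expR x by rewrite mulr_ge0 // ltW.
  lra.
have -> : p = 1 by apply/eqP; rewrite eq_le p1 hp.
by rewrite subrr add0r mul1r.
Qed.

Lemma dd_der (x : R) : is_derive x 1 dd (p * expR x).
Proof.
have h : is_derive x 1 (cst (1 - p) + p *: expR) (0 + p *: expR x).
  apply: is_deriveD.
by rewrite add0r in h.
Qed.


Definition qq : R -> R := (p *: expR) * (fun y => (dd y)^-1).
Lemma qqE x : qq x = p * expR x / dd x. Proof. by []. Qed.

Lemma qq_der (x : R) : is_derive x 1 qq (qq x * (1 - qq x)).
Proof.
have hv := @is_deriveV1 _ _ _ _ (lt0r_neq0 (dd_gt0 x)) (dd_der x).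
have he : is_derive x 1 (p *: expR) (p *: expR x) by apply: is_deriveZ.
have hm := is_deriveM he hv.
apply: (is_derive_eq hm).
rewrite qqE /= /GRing.scale /=.
have := dd_gt0 x; rewrite /dd => hd.
change (p *: expR x) with (p * expR x).
field; lra.
Qed.

Definition DD : R -> R := (4^-1) *: id + cst p - qq.
Lemma DDE x : DD x = x / 4 + p - qq x.
Proof. by rewrite /DD /= mulrC. Qed.

Lemma DD_der (x : R) : is_derive x 1 DD (4^-1 - qq x * (1 - qq x)).
Proof.
have h := qq_der x.
have h1 : is_derive x 1 ((4^-1) *: (id : R -> R) + cst p) (4^-1 *: 1 + 0).
  by apply: is_deriveD.
apply: (is_derive_eq (is_deriveB h1 h)).
change (4^-1 *: (1:R)) with (4^-1 * (1:R)).
by rewrite mulr1 addr0.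
Qed.

Lemma DD0 : DD 0 = 0.
Proof. rewrite DDE qqE /dd !expR0 mulr1 subrK divr1; lra. Qed.

Lemma qq_quarter x : qq x * (1 - qq x) <= 4^-1.
Proof. have : 0 <= (qq x - 2^-1) ^+ 2 by apply: sqr_ge0. nra. Qed.

Lemma DD_mono a b : a <= b -> DD a <= DD b.
Proof.
apply: (@ndecr_of _ DD (fun x => 4^-1 - qq x * (1 - qq x))).
  exact: DD_der.
by move=> x _; rewrite subr_ge0 qq_quarter.
Qed.

Definition HH : R -> R := (8^-1) *: (id * id) + p *: id - (@ln R \o dd).
Lemma HHE x : HH x = x ^+ 2 / 8 + x * p - ln (dd x).
Proof.
rewrite /HH; change (8^-1 * (x * x) + p * x - ln (dd x) = x ^+ 2 / 8 + x * p - ln (dd x)).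
rewrite expr2; ring.
Qed.

Lemma HH_der (x : R) : is_derive x 1 HH (DD x).
Proof.
have hl := @is_derive_comp1 _ _ _ _ _ _ (dd_der x) (is_derive1_ln (dd_gt0 x)).
have hid : is_derive x 1 (id : R -> R) 1 by apply: is_derive_id.
have h2 := is_deriveM hid hid.
have h3 : is_derive x 1 (8^-1 *: ((id:R->R) * id) + p *: id)
   (8^-1 *: (x%:A + x%:A) + p *: 1).
  by apply: is_deriveD.
apply: (is_derive_eq (is_deriveB h3 hl)).
rewrite DDE qqE /=.
change (8^-1 * (x * 1 + x * 1) + p * 1 - (dd x)^-1 * (p * expR x) = x / 4 + p - p * expR x / dd x).
have := dd_gt0 x => hd.
field; lra.
Qed.
Lemma HH_ge0 l : 0 <= HH l.
Proof.
have H0 : HH 0 = 0 by rewrite HHE /dd expR0 mulr1 subrK ln1; lra.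
have hD : forall x : R, is_derive x 1 HH (DD x) by move=> x; exact: HH_der.
case: (leP 0 l) => hl.
  have : HH 0 <= HH l.
    apply: (@ndecr_of _ HH DD 0 l hD _ hl).
    by move=> x /andP[x0 _]; rewrite -DD0 DD_mono // ltW.
  by rewrite H0.
have hN : forall x : R, is_derive x 1 (fun y => - HH y) (- DD x).
  move=> x; exact: is_deriveN (hD x).
have : - HH l <= - HH 0.
  apply: (@ndecr_of _ (fun y => - HH y) (fun y => - DD y) l 0 hN _ (ltW hl)).
  by move=> x /andP[_ x0]; rewrite oppr_ge0 -DD0 DD_mono // ltW.
rewrite H0; lra.
Qed.

Lemma hoeffding_lemma l :
  p * expR (l * (1 - p)) + (1 - p) * expR (l * (0 - p)) <= expR (l ^+ 2 / 8).
Proof.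
have h := HH_ge0 l; rewrite HHE in h.
have -> : p * expR (l * (1 - p)) + (1 - p) * expR (l * (0 - p)) =
   expR (- (l * p) + ln (dd l)).
  rewrite expRD lnK; last by rewrite posrE dd_gt0.
  rewrite /dd.
  have e1 : expR (l * (1 - p)) = expR l * expR (- (l * p)).
    by rewrite -expRD; congr expR; ring.
  have e2 : expR (l * (0 - p)) = expR (- (l * p)) by congr expR; ring.
  rewrite e1 e2; ring.
rewrite ler_expR; lra.
Qed.

End Hoeff.

Section Prob.
Variables (R : realType) (n t : nat).

Lemma sum_prod_ffun (G : 'I_t * 'I_n -> bool -> R) :
  \sum_(w : outcome n t) \prod_si G si (w si) = \prod_si (G si true + G si false).
Proof.
rewrite -bigA_distr_bigA /=; apply: eq_bigr => si _; by rewrite big_bool.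
Qed.

Lemma prod_pair (F : 'I_t * 'I_n -> R) :
  \prod_si F si = \prod_(s < t) \prod_(j < n) F (s, j).
Proof. by rewrite pair_big /=; apply: eq_bigr => -[s j]. Qed.

Variable p : 'rV[R]_n.
Hypothesis p01 : forall i, 0 <= p ord0 i <= 1.

Lemma weight_ge0 (w : outcome n t) : 0 <= weight p w.
Proof.
apply: prodr_ge0 => si _; have /andP[h0 h1] := p01 si.2.
by case: (w si); lra.
Qed.

Lemma weight_sum : \sum_(w : outcome n t) weight p w = 1.
Proof.
rewrite /weight (sum_prod_ffun (fun si b => if b then p ord0 si.2 else 1 - p ord0 si.2)).
by rewrite big1 // => si _; rewrite subrKC.
Qed.

Definition phi_mgf (q l : R) := q * expR (l * (1 - q)) + (1 - q) * expR (l * (0 - q)).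

Lemma mgf (i : 'I_n) (l : R) :
  \sum_(w : outcome n t) weight p w * expR (l * \sum_(s < t) ((w (s, i))%:R - p ord0 i))
  = phi_mgf (p ord0 i) l ^+ t.
Proof.
pose c (si : 'I_t * 'I_n) (b : bool) :=
  if si.2 == i then expR (l * ((b : nat)%:R - p ord0 i)) else 1.
pose G si b := (if b then p ord0 si.2 else 1 - p ord0 si.2) * c si b.
have E1 (w : outcome n t) : weight p w * expR (l * \sum_(s < t) ((w (s, i))%:R - p ord0 i))
   = \prod_si G si (w si).
  rewrite /G [RHS]big_split /= /weight; congr (_ * _).
  rewrite mulr_sumr expR_sum prod_pair.
  apply: eq_bigr => s _.
  rewrite (bigD1 i) //= big1 ?mulr1 /c /= ?eqxx //.
  by move=> j /negbTE ->.
rewrite (eq_bigr _ (fun w _ => E1 w)) sum_prod_ffun.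
rewrite prod_pair.
rewrite -[t in RHS]card_ord -prodr_const; apply: eq_bigr => s _.
rewrite (bigD1 i) //= big1 ?mulr1.
  by rewrite /G /c /= eqxx /phi_mgf mulr1n mulr0n.
move=> j /negbTE hj; rewrite /G /c /= hj !mulr1; exact: subrKC.
Qed.


Lemma phi_ge0 (i : 'I_n) l : 0 <= phi_mgf (p ord0 i) l.
Proof.
have /andP[h0 h1] := p01 i; rewrite /phi_mgf.
have := expR_gt0 (l * (1 - p ord0 i)); have := expR_gt0 (l * (0 - p ord0 i)).
nra.
Qed.

Lemma S_eq (w : outcome n t) (i : 'I_n) : (0 < t)%N ->
  \sum_(s < t) ((w (s, i))%:R - p ord0 i) = t%:R * (Xbar R w ord0 i - p ord0 i).
Proof.
move=> t0; rewrite sumrB sumr_const card_ord /Xbar mxE.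
have tn0 : (t%:R : R) != 0 by rewrite pnatr_eq0 -lt0n.
rewrite mulrBr mulrCA divff // mulr1 mulr_natl.
by [].
Qed.

Lemma tail_bound (i : 'I_n) (sg : bool) (eps : R) : (0 < t)%N -> 0 < eps ->
  \sum_(w : outcome n t)
     (if eps <= (if sg then 1 else -1) * (Xbar R w ord0 i - p ord0 i)
      then weight p w else 0)
  <= expR (- (2 * t%:R * eps ^+ 2)).
Proof.
move=> t0 e0.
set sgn : R := if sg then 1 else -1.
have sgn2 : sgn ^+ 2 = 1 by rewrite /sgn; case: (sg); rewrite ?expr1n ?sqrrN ?expr1n.
set l := 4 * eps * sgn.
set c := 4 * t%:R * eps ^+ 2.
have tpos : (0 : R) < t%:R by rewrite ltr0n.
apply: (@le_trans _ _ (\sum_(w : outcome n t) weight p w *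
     expR (l * \sum_(s < t) ((w (s, i))%:R - p ord0 i) - c))).
  apply: ler_sum => w _; case: ifP => h.
    rewrite -[X in X <= _]mulr1; apply: ler_wpM2l; first exact: weight_ge0.
    rewrite -[X in X <= _]expR0 ler_expR S_eq // subr_ge0 /l /c.
    move: h; set d := _ * (_ - _) => h.
    have -> : 4 * eps * sgn * (t%:R * (Xbar R w ord0 i - p ord0 i)) = 4 * eps * t%:R * d.
      by rewrite /d; ring.
    have hh : 0 <= (d - eps) * (eps * t%:R) by apply: mulr_ge0; [rewrite subr_ge0 | apply: mulr_ge0; apply: ltW].
    rewrite expr2; nra.
  by apply: mulr_ge0; [exact: weight_ge0 | exact: expR_ge0].
under eq_bigr => w _ do rewrite expRD mulrA.
rewrite -mulr_suml mgf.
have hphi := @hoeffding_lemma R (p ord0 i) (p01 i) l.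
have : phi_mgf (p ord0 i) l ^+ t <= expR (l ^+ 2 / 8) ^+ t.
  apply: lerXn2r; rewrite ?nnegrE ?phi_ge0 ?expR_ge0 //.
rewrite -expRM_natl => hle.
apply: le_trans (ler_wpM2r (expR_ge0 _) hle) _.
rewrite -expRD ler_expR /c /l.
have -> : (4 * eps * sgn) ^+ 2 = 16 * eps ^+ 2 * sgn ^+ 2 by ring.
rewrite sgn2; lra.
Qed.

End Prob.

Theorem lemma7 (R : realType) (n t : nat) (K : set 'rV[R]_n) (eps : R) :
  (0 < n)%N ->
  compact K ->
  K `<=` @unit_cube R n ->
  0 < eps ->
  ln (8 * n%:R) / (2 * eps ^+ 2) <= t%:R ->
  forall (p : 'rV[R]_n), K p ->
  forall (A : set 'rV[R]_n), A `<=` @unit_cube R n ->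
  @PY R n t K eps p A <= 2 * @PXbar R n t p A.
Proof.
move=> n0 _ Kc e0 ht p Kp A Ac.
have p01 : forall i, 0 <= p ord0 i <= 1 := Kc p Kp.
have npos : (1 : R) <= n%:R by rewrite ler1n.
have e2 : 0 < 2 * eps ^+ 2 by rewrite mulr_gt0 // exprn_gt0.
have l8 : 0 < ln (8 * n%:R : R) by apply: ln_gt0; lra.
have t0 : (0 < t)%N.
  rewrite -(ltr0n R); apply: lt_le_trans ht; exact: divr_gt0.
have key : expR (- (2 * t%:R * eps ^+ 2)) <= (8 * n%:R)^-1.
  have h8 : (0 : R) < 8 * n%:R by lra.
  rewrite -[X in _ <= X^-1](lnK (x := 8 * n%:R)) ?posrE // -expRN ler_expR lerN2.
  have -> : 2 * t%:R * eps ^+ 2 = t%:R * (2 * eps ^+ 2) by ring.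
  by move: ht; rewrite ler_pdivrMr.
set B := Binf K eps.
have PB : 3 / 4 <= @PXbar R n t p B.
  pose E i (sg : bool) (w : outcome n t) :=
     eps <= (if sg then 1 else -1) * (Xbar R w ord0 i - p ord0 i).
  have pw : forall w : outcome n t, weight p w -
     \sum_(i < n) \sum_(sg : bool) (if E i sg w then weight p w else 0)
     <= (if `[< B (Xbar R w) >] then weight p w else 0).
    move=> w.
    have Sge0 : 0 <= \sum_(i < n) \sum_(sg : bool) (if E i sg w then weight p w else 0).
      apply: sumr_ge0 => i _; apply: sumr_ge0 => sg _.
      by case: ifP => _ //; exact: weight_ge0.
    case: (asboolP (B (Xbar R w))) => hB.
      lra.
    have [i hi] : exists i, ~ (`|Xbar R w ord0 i - p ord0 i| < eps).
      apply/existsNP => H; apply: hB; exists p => //.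
    have hi' : eps <= `|Xbar R w ord0 i - p ord0 i| by rewrite leNgt; apply/negP.
    set sg := (0 <= Xbar R w ord0 i - p ord0 i).
    have hE : E i sg w.
      rewrite /E /sg; case: (lerP 0 (Xbar R w ord0 i - p ord0 i)) => hd.
        by rewrite mul1r -(ger0_norm hd).
      by rewrite mulN1r -(ltr0_norm hd).
    have : weight p w <= \sum_(i < n) \sum_(sg : bool) (if E i sg w then weight p w else 0).
      rewrite (bigD1 i) //= (bigD1 sg) //= hE.
      rewrite -addrA lerDl; apply: addr_ge0.
        by apply: sumr_ge0 => s _; case: ifP => _ //; exact: weight_ge0.
      apply: sumr_ge0 => j _; apply: sumr_ge0 => s _.
      by case: ifP => _ //; exact: weight_ge0.
    lra.
  have hsum : \sum_(w : outcome n t) (weight p w -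
     \sum_(i < n) \sum_(sg : bool) (if E i sg w then weight p w else 0))
     <= \sum_(w : outcome n t) (if `[< B (Xbar R w) >] then weight p w else 0).
    by apply: ler_sum => w _; exact: pw w.
  have hS : \sum_(w : outcome n t)
     \sum_(i < n) \sum_(sg : bool) (if E i sg w then weight p w else 0) <= 4^-1.
    rewrite exchange_big /=.
    apply: (@le_trans _ _ (\sum_(i < n) (2 * (8 * n%:R)^-1))).
      apply: ler_sum => i _.
      rewrite exchange_big /= big_bool /=.
      have h1 := @tail_bound R n t p p01 i true eps t0 e0.
      have h2 := @tail_bound R n t p p01 i false eps t0 e0.
      rewrite /E; lra.
    rewrite sumr_const card_ord -[_ *+ n]mulr_natr.
    have h8 : (8 * n%:R : R) != 0 by apply: lt0r_neq0; lra.
    have -> : 2 * (8 * n%:R)^-1 * n%:R = 4^-1 :> R.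
      by field; apply: lt0r_neq0; lra.
    by [].
  rewrite sumrB weight_sum in hsum.
  rewrite /PXbar; lra.
rewrite /PY -/B.
have hAB : @PXbar R n t p (A `&` B) <= @PXbar R n t p A.
  apply: ler_sum => w _.
  case: (asboolP ((A `&` B) (Xbar R w))) => h;
    case: (asboolP (A (Xbar R w))) => h' //.
  - by case: h => /h'.
  - exact: weight_ge0.
have hA0 : 0 <= @PXbar R n t p A.
  by apply: sumr_ge0 => w _; case: ifP => _ //; exact: weight_ge0.
rewrite ler_pdivrMr; [nra | lra].
Qed.
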